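(* For every integer $m\geq 4$, the cycle sun $CS_m$ and the wheel sun $WS_m$ satisfy $\eta(CS_m)=\eta(WS_m)=2$.
   Context: All graphs are finite, simple and undirected. Indices are taken modulo $m$, so $u_0=u_m$ and $v_0=v_m$. The cycle sun $CS_m$ has vertices $u_1,\dots,u_m,v_1,\dots,v_m$ and edges $(u_i,u_{i-1})$ and $(u_i,v_{i-1}),(u_i,v_i)$ for all $i\in[m]$ (so the $u_i$ form a cycle and each $v_i$ is adjacent exactly to $u_i$ and $u_{i+1}$). The wheel sun $WS_m$ is obtained from $CS_m$ by adding one further vertex $w$ adjacent to all of $u_1,\dots,u_m$. For a vertex $v$, $N(v)$ is its set of neighbours. For a positive integer $k$, $[k]=\{1,\dots,k\}$. For a labeling $f:V(G)\to[k]$ and $S\subseteq V(G)$, $f(S)=\sum_{u\in S}f(u)$. A labeling $f:V(G)\to[k]$ is an additive $k$-coloring if $f(N(u))\neq f(N(v))$ for every edge $(u,v)$ of $G$. The additive chromatic number $\eta(G)$ is the least $k$ for which $G$ has an additive $k$-coloring. *)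

(* Defs.v *)
From mathcomp Require Import all_boot.
Set Implicit Arguments. Unset Strict Implicit. Unset Printing Implicit Defensive.

Definition simple_graph (T : finType) (adj : rel T) : Prop :=
  (forall x y, adj x y = adj y x) /\ (forall x, ~~ adj x x).

Definition nbsum (T : finType) (adj : rel T) (f : T -> nat) (x : T) : nat :=
  \sum_(y | adj x y) f y.

Definition additive_coloring (T : finType) (adj : rel T) (k : nat) (f : T -> nat) : Prop :=
  (forall x, 1 <= f x <= k) /\
  (forall x y, adj x y -> nbsum adj f x != nbsum adj f y).

Definition has_additive_coloring (T : finType) (adj : rel T) (k : nat) : Prop :=
  exists f : T -> nat, additive_coloring adj k f.

Definition additive_chromatic_number_is (T : finType) (adj : rel T) (k : nat) : Prop :=
  0 < k /\ has_additive_coloring adj k /\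
  (forall k', 0 < k' < k -> ~ has_additive_coloring adj k').

(* Cycle sun CS_m: inl i = u_(i+1), inr i = v_(i+1), indices mod m (0-based).
   u_i ~ u_(i+1); v_i ~ u_i and v_i ~ u_(i+1). *)
Definition cs_adj (m : nat) : rel ('I_m + 'I_m) :=
  fun a b =>
    match a, b with
    | inl i, inl j => (val j == (val i).+1 %% m) || (val i == (val j).+1 %% m)
    | inl i, inr j => (val i == val j) || (val i == (val j).+1 %% m)
    | inr i, inl j => (val j == val i) || (val j == (val i).+1 %% m)
    | inr _, inr _ => false
    end.

(* Wheel sun WS_m: None = hub w, adjacent to all u_i. *)
Definition ws_adj (m : nat) : rel (option ('I_m + 'I_m)) :=
  fun a b =>
    match a, b with
    | Some x, Some y => cs_adj x y
    | None, Some (inl _) => true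
    | Some (inl _), None => true
    | _, _ => false
    end.

(* Main.v *)
Require Import Defs.
From mathcomp Require Import all_boot zify.
Set Implicit Arguments. Unset Strict Implicit. Unset Printing Implicit Defensive.

Lemma big_optionType (I : finType) (P : pred (option I)) (F : option I -> nat) :
  \sum_(i | P i) F i = (if P None then F None else 0) + \sum_(i | P (Some i)) F (Some i).
Proof.
rewrite ![index_enum _]unlock [@Finite.enum in LHS]unlock /= big_cons big_map.
by case: (P None).
Qed.

Lemma sum2 (T : finType) (a b : T) (F : T -> nat) : a != b ->
  \sum_(j | (j == a) || (j == b)) F j = F a + F b.
Proof.
move=> ab; rewrite (bigD1 a) ?eqxx //=; congr (_ + _).
rewrite (big_pred1 b) // => j /=.
case: (eqVneq j a) => [->|] /=; first by rewrite (negbTE ab).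
idtac.
by rewrite andbT.
Qed.

Lemma predS m (i j : 'I_m) : ((nat_of_ord i) == (nat_of_ord j).+1 %% m) = (j == ord_pred i).
Proof.
apply/eqP/eqP => [H|->].
  by rewrite -[j]ordSK; congr ord_pred; apply: val_inj.
by rewrite -[in LHS](ord_predK i).
Qed.

Lemma succS m (i j : 'I_m) : ((nat_of_ord j) == (nat_of_ord i).+1 %% m) = (j == ordS i).
Proof. by []. Qed.

Lemma valS m (j : 'I_m) : (j.+1 = m /\ nat_of_ord (ordS j) = 0) \/ (j.+1 < m /\ nat_of_ord (ordS j) = j.+1).
Proof.
have Hj := ltn_ord j; rewrite /=.
have [H|H] : j.+1 < m \/ j.+1 = m by lia.
- by right; split => //; rewrite modn_small.
- by left; split => //; rewrite H modnn.
Qed.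

Lemma valP m (j : 'I_m) : (nat_of_ord j = 0 /\ nat_of_ord (ord_pred j) = m.-1) \/ (0 < j /\ nat_of_ord (ord_pred j) = j.-1).
Proof.
rewrite /=; have Hm := ltn_ord j.
case: (posnP j) => H.
- by left; split => //=; rewrite H add0n modn_small // prednK // (leq_ltn_trans _ Hm).
- right; split=> //; have -> : (j + m).-1 = j.-1 + m by lia.
  by rewrite modnDr modn_small //; lia.
Qed.

Lemma S_neq_P m (i : 'I_m) : 2 < m -> ordS i != ord_pred i.
Proof.
move=> Hm; apply/eqP => /(congr1 (@nat_of_ord m)) E; move: E (ltn_ord i).
case: (valS i) (valP i) => [[? ->]|[? ->]] [[? ->]|[? ->]] Hi; lia.
Qed.

Lemma S_neq m (i : 'I_m) : 1 < m -> i != ordS i.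
Proof.
move=> Hm; apply/eqP => /(congr1 (@nat_of_ord m)) E; move: E (ltn_ord i).
case: (valS i) => [[? ->]|[? ->]] Hi; lia.
Qed.

Lemma P_neq m (i : 'I_m) : 1 < m -> i != ord_pred i.
Proof.
move=> Hm; apply/eqP => /(congr1 (@nat_of_ord m)) E; move: E (ltn_ord i).
case: (valP i) => [[? ->]|[? ->]] Hi; lia.
Qed.

Lemma eqo m (i j : 'I_m) : (nat_of_ord i == nat_of_ord j) = (j == i).
Proof. by rewrite eq_sym. Qed.

Lemma eqo2 m (i j : 'I_m) : (nat_of_ord i == nat_of_ord j) = (i == j).
Proof. by []. Qed.

Lemma nbsum_u m (f : 'I_m + 'I_m -> nat) (i : 'I_m) : 2 < m ->
  nbsum (@cs_adj m) f (inl i) =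
  f (inl (ord_pred i)) + f (inl (ordS i)) + (f (inr (ord_pred i)) + f (inr i)).
Proof.
move=> Hm; rewrite /nbsum big_sumType /=.
under eq_bigl => j do rewrite succS predS.
rewrite (sum2 (fun j => f (inl j)) (S_neq_P i Hm)) addnC.
under eq_bigl => j do rewrite predS eqo.
have Hm1 : 1 < m by lia.
rewrite (sum2 (fun j => f (inr j)) (P_neq i Hm1)) /=; lia.
Qed.

Lemma nbsum_v m (f : 'I_m + 'I_m -> nat) (i : 'I_m) : 2 < m ->
  nbsum (@cs_adj m) f (inr i) = f (inl i) + f (inl (ordS i)).
Proof.
move=> Hm; rewrite /nbsum big_sumType /= [X in _ + X]big_pred0_eq addn0.
under eq_bigl => j do rewrite succS eqo2.
have Hm1 : 1 < m by lia.
rewrite (sum2 (fun j => f (inl j)) (S_neq i Hm1)). done.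
Qed.

Lemma nbsum_wu m (f : option ('I_m + 'I_m) -> nat) (i : 'I_m) :
  nbsum (@ws_adj m) f (Some (inl i)) = f None + nbsum (@cs_adj m) (fun x => f (Some x)) (inl i).
Proof. by rewrite /nbsum big_optionType. Qed.

Lemma nbsum_wv m (f : option ('I_m + 'I_m) -> nat) (i : 'I_m) :
  nbsum (@ws_adj m) f (Some (inr i)) = nbsum (@cs_adj m) (fun x => f (Some x)) (inr i).
Proof. by rewrite /nbsum big_optionType. Qed.

Lemma nbsum_ww m (f : option ('I_m + 'I_m) -> nat) :
  nbsum (@ws_adj m) f None = \sum_(j < m) f (Some (inl j)).
Proof.
rewrite /nbsum big_optionType /= add0n big_sumType /= [X in _ + X]big_pred0_eq addn0.
by [].
Qed.

Definition colf m (A B : nat -> nat) (x : 'I_m + 'I_m) : nat :=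
  match x with inl i => A i | inr i => B i end.
Definition wcolf m (A B : nat -> nat) (W : nat) (x : option ('I_m + 'I_m)) : nat :=
  match x with None => W | Some y => colf A B y end.
Definition Su m (A B : nat -> nat) (i : 'I_m) : nat :=
  A (ord_pred i) + A (ordS i) + (B (ord_pred i) + B i).
Definition Sv m (A : nat -> nat) (i : 'I_m) : nat := A i + A (ordS i).

Definition goodc m (A B : nat -> nat) :=
  forall i : 'I_m, Su A B (ordS i) <> Su A B i /\ Sv A i <> Su A B i /\ Sv A i <> Su A B (ordS i).

Lemma adj_cases m (i j : 'I_m) :
  (cs_adj (inl i) (inl j) -> j = ordS i \/ i = ordS j) /\
  (cs_adj (inl i) (inr j) -> j = i \/ i = ordS j) /\
  (cs_adj (inr i) (inl j) -> j = i \/ j = ordS i) /\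
  (cs_adj (inr i) (inr j) -> False).
Proof.
split; first by rewrite /cs_adj succS predS => /orP [/eqP ->|/eqP ->]; [left|right; rewrite ord_predK].
split; first by rewrite /cs_adj predS eqo2 => /orP [/eqP ->|/eqP ->]; [left|right; rewrite ord_predK].
split; first by rewrite /cs_adj succS eqo2 => /orP [/eqP ->|/eqP ->]; [left|right].
by [].
Qed.

Lemma cs_good m A B : 2 < m -> (forall x, 1 <= A x <= 2) -> (forall x, 1 <= B x <= 2) ->
  goodc m A B -> additive_coloring (@cs_adj m) 2 (colf A B).
Proof.
move=> Hm HA HB H; split; first by case=> i /=.
move=> [i|i] [j|j]; case: (adj_cases i j) => H1 [H2 [H3 H4]] // /[dup] Hadj.
- move/H1 => [->|->]; rewrite !nbsum_u //= ; apply/eqP;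
  [case: (H i) | case: (H j)]; rewrite /Su /Sv /= ?ordSK; lia.
- move/H2 => [->|->]; rewrite nbsum_u ?nbsum_v //= ; apply/eqP;
  [case: (H i) | case: (H j)]; rewrite /Su /Sv /= ?ordSK; lia.
- move/H3 => [->|->]; rewrite nbsum_u ?nbsum_v //= ; apply/eqP;
  [case: (H i) | case: (H i)]; rewrite /Su /Sv /= ?ordSK; lia.
Qed.

Lemma ws_good m A B W : 2 < m -> (forall x, 1 <= A x <= 2) -> (forall x, 1 <= B x <= 2) ->
  1 <= W <= 2 -> goodc m A B -> (forall i : 'I_m, \sum_(j < m) A j <> W + Su A B i) ->
  additive_coloring (@ws_adj m) 2 (wcolf A B W).
Proof.
move=> Hm HA HB HW H HS; split; first by case=> [[i|i]|] /=.
move=> [x|] [y|] //=; last first.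
- case: y => [j|j] // _.
  rewrite nbsum_ww nbsum_wu nbsum_u //=; apply/eqP; exact: HS.
- case: x => [i|i] // _.
  rewrite nbsum_ww nbsum_wu nbsum_u //=; apply/eqP => E; apply: (HS i); rewrite -E.
  by [].
have Hb : forall k : 'I_m, (0 < A (nat_of_ord k) <= 2) /\ (0 < B (nat_of_ord k) <= 2) by move=> k; split.
case: x y => [i|i] [j|j]; case: (adj_cases i j) => H1 [H2 [H3 H4]] //.
- move/H1 => [->|->]; rewrite !nbsum_wu !nbsum_u //= ; apply/eqP;
  [case: (H i) | case: (H j)]; rewrite /Su /Sv /= ?ordSK; lia.
- move/H2 => [->|->].
  + move: (Hb i) (Hb (ordS i)) (Hb (ord_pred i)) HW.
    rewrite nbsum_wu nbsum_wv nbsum_u ?nbsum_v //= => *; apply/eqP; lia.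
  + move: (Hb j) (Hb (ordS j)) (Hb (ord_pred (ordS j))) (Hb (ordS (ordS j))) HW.
    rewrite nbsum_wu nbsum_wv nbsum_u ?nbsum_v //= => *; apply/eqP; lia.
- move/H3 => [->|->].
  + move: (Hb i) (Hb (ordS i)) (Hb (ord_pred i)) HW.
    rewrite nbsum_wu nbsum_wv nbsum_u ?nbsum_v //= => *; apply/eqP; lia.
  + move: (Hb i) (Hb (ordS i)) (Hb (ord_pred (ordS i))) (Hb (ordS (ordS i))) HW.
    rewrite nbsum_wu nbsum_wv nbsum_u ?nbsum_v //= => *; apply/eqP; lia.
Qed.

Lemma no_one_cs m : 2 < m -> ~ has_additive_coloring (@cs_adj m) 1.
Proof.
move=> Hm [f [Hf Hc]].
have Hf1 : forall x, f x = 1 by move=> x; move: (Hf x); lia.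
pose i := Ordinal (ltn_trans (isT : 0 < 2) Hm).
have /Hc : cs_adj (inl i) (inl (ordS i)) by rewrite /cs_adj succS eqxx.
by rewrite !nbsum_u // !Hf1.
Qed.

Lemma no_one_ws m : 2 < m -> ~ has_additive_coloring (@ws_adj m) 1.
Proof.
move=> Hm [f [Hf Hc]].
have Hf1 : forall x, f x = 1 by move=> x; move: (Hf x); lia.
pose i := Ordinal (ltn_trans (isT : 0 < 2) Hm).
have /Hc : ws_adj (Some (inl i)) (Some (inl (ordS i))) by rewrite /ws_adj /cs_adj succS eqxx.
by rewrite !nbsum_wu !nbsum_u // !Hf1.
Qed.

Lemma nth_range (s : seq nat) : all (fun v => 1 <= v <= 2) s -> forall x, 1 <= nth 1 s x <= 2.
Proof.
elim: s => [|a s IH] /= H x; first by rewrite nth_nil.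
case/andP: H => Ha Hs; case: x => [|x] //=; exact: IH.
Qed.

Lemma sum_ge m (A : nat -> nat) : (forall x, 1 <= A x <= 2) -> m <= \sum_(j < m) A j.
Proof.
move=> HA; rewrite -[m in m <= _]card_ord -sum1_card.
by apply: leq_sum => j _; case/andP: (HA j).
Qed.

Definition Ag m i := if i == m - 2 then 2 else 1.
Definition Pp i := if i %% 4 < 2 then 1 else 2.
Definition Bg m i := if i == m - 3 then 2 else if i == m - 2 then 1 else if i == m - 1 then 2 else Pp i.

Ltac crush := repeat (first [case: eqP => ? | case: ltnP => ?]; try (exfalso; lia)); lia.

Lemma Ag_range m x : 1 <= Ag m x <= 2.
Proof. by rewrite /Ag; case: eqP. Qed.
Lemma Bg_range m x : 1 <= Bg m x <= 2.
Proof. by rewrite /Bg /Pp; do 3?case: eqP => _ //; case: ifP. Qed.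

Lemma good_gen m : 9 <= m -> goodc m (Ag m) (Bg m).
Proof.
move=> Hm i; rewrite /Su /Sv ordSK.
move: (ltn_ord i) (valS i) (valS (ordS i)) (valP i).
move: (nat_of_ord (ordS (ordS i))) => n2.
move: (nat_of_ord (ordS i)) => n1.
move: (nat_of_ord (ord_pred i)) => p.
move: (nat_of_ord i) => k.
move=> Hk [[? ->]|[? ->]] [[? ->]|[? ->]] [[? ->]|[? ->]]; rewrite /Ag /Bg /Pp;
  (split; [|split]); crush.
Qed.

Lemma finish m A B W : 2 < m -> (forall x, 1 <= A x <= 2) -> (forall x, 1 <= B x <= 2) ->
  1 <= W <= 2 -> goodc m A B -> (forall i : 'I_m, \sum_(j < m) A j <> W + Su A B i) ->
  additive_chromatic_number_is (@cs_adj m) 2 /\ additive_chromatic_number_is (@ws_adj m) 2.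
Proof.
move=> Hm HA HB HW Hg HS; split; (split; [done | split]).
- by exists (colf A B); exact: (cs_good Hm HA HB Hg).
- move=> k' Hk'; have Hk1 : k' = 1 by lia.
  by rewrite Hk1; apply: no_one_cs.
- by exists (wcolf A B W); exact: (ws_good Hm HA HB HW Hg HS).
- move=> k' Hk'; have Hk1 : k' = 1 by lia.
  by rewrite Hk1; apply: no_one_ws.
Qed.

Lemma gen_case m : 10 <= m ->
  additive_chromatic_number_is (@cs_adj m) 2 /\ additive_chromatic_number_is (@ws_adj m) 2.
Proof.
move=> Hm; apply: (@finish m (Ag m) (Bg m) 1) => //; first by lia.
- exact: Ag_range.
- exact: Bg_range.
- by apply: good_gen; lia.
- move=> i; have := sum_ge m (Ag_range m); rewrite /Su.
  move: (Ag_range m (ord_pred i)) (Ag_range m (ordS i)) (Bg_range m (ord_pred i)) (Bg_range m i).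
  lia.
Qed.

Ltac enum_ord := let k := fresh "k" in let Hk := fresh "Hk" in
  intros [k Hk]; do 10? (destruct k as [|k]); try (exfalso; by []).

Lemma case4 : additive_chromatic_number_is (@cs_adj 4) 2 /\ additive_chromatic_number_is (@ws_adj 4) 2.
Proof. apply: (@finish _ (nth 1 [:: 1; 1; 1; 1]) (nth 1 [:: 1; 1; 2; 2]) 1); try done; try exact: nth_range.
- enum_ord; rewrite /Su /Sv; (split; [|split]); vm_compute; lia.
- rewrite !big_ord_recr big_ord0; enum_ord; rewrite /Su; vm_compute; lia.
Qed.

Lemma case5 : additive_chromatic_number_is (@cs_adj 5) 2 /\ additive_chromatic_number_is (@ws_adj 5) 2.
Proof.
apply: (@finish _ (nth 1 [:: 1; 1; 2; 1; 2]) (nth 1 [:: 2; 1; 1; 2; 2]) 2); try done; try exact: nth_range.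
- enum_ord; rewrite /Su /Sv; (split; [|split]); vm_compute; lia.
- rewrite !big_ord_recr big_ord0; enum_ord; rewrite /Su; vm_compute; lia.
Qed.

Lemma case6 : additive_chromatic_number_is (@cs_adj 6) 2 /\ additive_chromatic_number_is (@ws_adj 6) 2.
Proof.
apply: (@finish _ (nth 1 [:: 1; 1; 1; 2; 1; 2]) (nth 1 [:: 1; 1; 1; 1; 1; 1]) 1); try done; try exact: nth_range.
- enum_ord; rewrite /Su /Sv; (split; [|split]); vm_compute; lia.
- rewrite !big_ord_recr big_ord0; enum_ord; rewrite /Su; vm_compute; lia.
Qed.

Lemma case7 : additive_chromatic_number_is (@cs_adj 7) 2 /\ additive_chromatic_number_is (@ws_adj 7) 2.
Proof.
apply: (@finish _ (nth 1 [:: 1; 1; 1; 1; 2; 1; 2]) (nth 1 [:: 1; 1; 2; 1; 1; 1; 1]) 1); try done; try exact: nth_range.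
- enum_ord; rewrite /Su /Sv; (split; [|split]); vm_compute; lia.
- rewrite !big_ord_recr big_ord0; enum_ord; rewrite /Su; vm_compute; lia.
Qed.

Lemma case8 : additive_chromatic_number_is (@cs_adj 8) 2 /\ additive_chromatic_number_is (@ws_adj 8) 2.
Proof.
apply: (@finish _ (nth 1 [:: 1; 1; 1; 1; 1; 1; 1; 1]) (nth 1 [:: 1; 1; 2; 2; 1; 1; 2; 2]) 1); try done; try exact: nth_range.
- enum_ord; rewrite /Su /Sv; (split; [|split]); vm_compute; lia.
- rewrite !big_ord_recr big_ord0; enum_ord; rewrite /Su; vm_compute; lia.
Qed.

Lemma case9 : additive_chromatic_number_is (@cs_adj 9) 2 /\ additive_chromatic_number_is (@ws_adj 9) 2.
Proof.
apply: (@finish _ (nth 1 [:: 1; 1; 1; 1; 1; 1; 1; 2; 1]) (nth 1 [:: 1; 1; 2; 2; 1; 1; 2; 1; 2]) 1); try done; try exact: nth_range.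
- enum_ord; rewrite /Su /Sv; (split; [|split]); vm_compute; lia.
- rewrite !big_ord_recr big_ord0; enum_ord; rewrite /Su; vm_compute; lia.
Qed.

Theorem mainTheorem13 (m : nat) : 4 <= m ->
  additive_chromatic_number_is (@cs_adj m) 2 /\
  additive_chromatic_number_is (@ws_adj m) 2.
Proof.
case: m => [|[|[|[|[|[|[|[|[|[|m]]]]]]]]]] // _;
  [exact: case4 | exact: case5 | exact: case6 | exact: case7 | exact: case8 | exact: case9 |].
by apply: gen_case.
Qed.
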